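(* Consider the D2EAL algorithm (without periodic reset) described in the context, run for a horizon $T\ge1$ with learning parameters $\eta_\alpha>0,\eta_w>0$ on an arbitrary target sequence and arbitrary expert predictions, and fix an agent $i\in[N]$. Assume (Assumption 1) that $\Omega_i(t)\subseteq\Omega_i(t-1)$ for all $t=1,\dots,T$ (hence $\Lambda_i(t)\subseteq\Lambda_i(t-1)$). Then $$R_i^S(T):=\hat L_{T,i}-\min_{j\in\Lambda_i(T)}\bar L_{T,j}\le\frac{\eta_wT}{8}+\frac{\log d_i(0)}{\eta_w}.$$
   Context: Setup. There are $N\ge 1$ agents indexed by $i\in[N]$ and a horizon $T\ge1$. The outcome space $\mathcal Y$ and action space $\mathcal A$ are convex subsets of $\mathbb R^n$. The loss $l:\mathcal A\times\mathcal Y\to[0,1]$ is convex in its first argument. The target sequence $y_1,\dots,y_T\in\mathcal Y$ is arbitrary. For each agent $i$ and each $t\ge1$, an ''expert'' supplies an arbitrary prediction $f_{t,i}\in\mathcal A$ of $y_t$ (available at time $t-1$). Agents communicate over a time-varying undirected graph; $\Omega_i(t)$ is the set of neighbours of agent $i$ at time $t$, $\Lambda_i(t):=\Omega_i(t)\cup\{i\}$ and $d_i(t):=|\Lambda_i(t)|$. D2EAL (without periodic reset). Initialize $\hat f_{0,i}=f_{1,i}$, $\hat\alpha_i(0)=\hat\alpha'_i(0)=\hat w_{ii}(0)=1$ for all $i$. For $t=0,1,\dots,T-1$, each agent $i$ computes: $\alpha_i(t)=\hat\alpha_i(t)/(\hat\alpha_i(t)+\hat\alpha'_i(t))$; individual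 prediction $\bar f_{t+1,i}=\alpha_i(t)f_{t+1,i}+(1-\alpha_i(t))\hat f_{t,i}$; social weights $w_{ij}(t)=\hat w_{jj}(t)/\sum_{j'\in\Lambda_i(t)}\hat w_{j'j'}(t)$ for $j\in\Lambda_i(t)$ and $w_{ij}(t)=0$ otherwise; social prediction $\hat f_{t+1,i}=\sum_{j\in\Lambda_i(t)}w_{ij}(t)\bar f_{t+1,j}$. After $y_{t+1}$ is revealed, define the losses $l_{t+1,i}=l(f_{t+1,i},y_{t+1})$, $\hat l^-_{t+1,i}=l(\hat f_{t,i},y_{t+1})$, $\bar l_{t+1,i}=l(\bar f_{t+1,i},y_{t+1})$, $\hat l_{t+1,i}=l(\hat f_{t+1,i},y_{t+1})$, and update $\hat\alpha_i(t+1)=\hat\alpha_i(t)e^{-\eta_\alpha l_{t+1,i}}$, $\hat\alpha'_i(t+1)=\hat\alpha'_i(t)e^{-\eta_\alpha \hat l^-_{t+1,i}}$, $\hat w_{ii}(t+1)=\hat w_{ii}(t)e^{-\eta_w\bar l_{t+1,i}}$. Cumulative losses: $L_{T,i}=\sum_{t=1}^T l_{t,i}$, $\hat L^-_{T,i}=\sum_{t=1}^T\hat l^-_{t,i}$, $\bar L_{T,i}=\sum_{t=1}^T\bar l_{t,i}$, $\hat L_{T,i}=\sum_{t=1}^T\hat l_{t,i}$. *)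

(* Defs.v *)
From mathcomp Require Import all_boot all_order all_algebra.
From mathcomp Require Import all_classical all_reals all_analysis.
Set Implicit Arguments. Unset Strict Implicit. Unset Printing Implicit Defensive.
Import Order.TTheory GRing.Theory Num.Theory.
Local Open Scope ring_scope.

Section D2EAL.
Variables (R : realType) (N n : nat).
Notation vec := 'rV[R]_n.

Definition convex_subset (S : vec -> Prop) :=
  forall x y (t : R), S x -> S y -> 0 <= t <= 1 -> S (t *: x + (1 - t) *: y).

Definition convex_in_first (A Y : vec -> Prop) (l : vec -> vec -> R) :=
  forall a b y (t : R), A a -> A b -> Y y -> 0 <= t <= 1 ->
    l (t *: a + (1 - t) *: b) y <= t * l a y + (1 - t) * l b y.

Definition Lambda (Omega : nat -> 'I_N -> {set 'I_N}) (t : nat) (i : 'I_N)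
  : {set 'I_N} := i |: Omega t i.

Record state := State {
  a_hat  : 'I_N -> R;
  a_hat' : 'I_N -> R;
  w_hat  : 'I_N -> R;
  f_hat  : 'I_N -> vec }.

Variables (l : vec -> vec -> R) (y : nat -> vec) (f : nat -> 'I_N -> vec)
          (Omega : nat -> 'I_N -> {set 'I_N}) (eta_a eta_w : R).

Definition alpha (s : state) (i : 'I_N) : R :=
  a_hat s i / (a_hat s i + a_hat' s i).

(* individual prediction \bar f_{t+1,i}, computed from the state at time t *)
Definition f_bar (t : nat) (s : state) (i : 'I_N) : vec :=
  alpha s i *: f t.+1 i + (1 - alpha s i) *: f_hat s i.

Definition w (t : nat) (s : state) (i j : 'I_N) : R :=
  if j \in Lambda Omega t i then
    w_hat s j / (\sum_(j' in Lambda Omega t i) w_hat s j')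
  else 0.

Definition step (t : nat) (s : state) : state :=
  State (fun i => a_hat s i * expR (- (eta_a * l (f t.+1 i) (y t.+1))))
        (fun i => a_hat' s i * expR (- (eta_a * l (f_hat s i) (y t.+1))))
        (fun i => w_hat s i * expR (- (eta_w * l (f_bar t s i) (y t.+1))))
        (fun i => \sum_(j in Lambda Omega t i) w t s i j *: f_bar t s j).

Fixpoint run (t : nat) : state :=
  match t with
  | 0 => State (fun _ => 1) (fun _ => 1) (fun _ => 1) (fun i => f 1 i)
  | t'.+1 => step t' (run t')
  end.

Definition Lbar (T : nat) (i : 'I_N) : R :=
  \sum_(t < T) l (f_bar t (run t) i) (y t.+1).

Definition Lhat (T : nat) (i : 'I_N) : R :=
  \sum_(t < T) l (f_hat (run t.+1) i) (y t.+1).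

End D2EAL.

(* Main.v *)
Require Import Defs.
From mathcomp Require Import all_boot all_order all_algebra.
From mathcomp Require Import all_classical all_reals all_analysis.
From mathcomp Require Import ring lra.
Import Order.TTheory GRing.Theory Num.Theory.
Local Open Scope classical_set_scope.
Local Open Scope ring_scope.
Section An.
Variable R : realType.

Lemma is_derive_comp1 {f g : R -> R} {x df dg : R} :
  is_derive x 1 f df -> is_derive (f x) 1 g dg -> is_derive x 1 (g \o f) (dg * df).
Proof.
move=> hf hg.
have Df : derivable f x 1 by apply: ex_derive.
have Dg : derivable g (f x) 1 by apply: ex_derive.
have D : derivable (g \o f) x 1.
  by apply/derivable1_diffP; apply: differentiable_comp; apply/derivable1_diffP.
apply: DeriveDef => //.
have e1 : 'D_1 f x = df by case: hf.
have e2 : 'D_1 g (f x) = dg by case: hg.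
have := derive1_comp Df Dg.
rewrite !derive1E e1 e2; exact.
Qed.

Lemma mvt_le0 (F dF : R -> R) (u : R) : 0 <= u ->
  (forall x : R, is_derive x 1 F (dF x)) -> (forall x, 0 <= x -> dF x <= 0) ->
  F u <= F 0.
Proof.
move=> u0 hd hdF.
case: (ltrgtP u 0) u0 => // [u_gt0 _|-> _]; last by [].
have [c cin E] := MVT u_gt0 (fun x _ => hd x)
  (derivable_within_continuous (fun z _ => @ex_derive _ _ _ _ _ _ _ (hd z))).
rewrite -subr_le0 E; apply: mulr_le0_ge0; last by rewrite subr_ge0 ltW.
by apply: hdF; move: cin; rewrite in_itv /= => /andP[/ltW].
Qed.

Lemma L1 (v : R) : 0 <= v -> expR v - 1 <= v / 2 * (expR v + 1).
Proof.
move=> v0.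
pose F := fun x : R => expR x - 1 - x / 2 * (expR x + 1).
pose dF := fun x : R => (expR x - x * expR x - 1) / 2.
suff : F v <= F 0 by rewrite /F expR0 !mul0r; lra.
apply: (@mvt_le0 F dF) => // [x|x x0].
  rewrite /F /dF.
  have -> : (fun x : R => expR x - 1 - x / 2 * (expR x + 1)) =
     (expR - cst 1) - (2^-1 *: (id * (expR + cst 1))).
    by apply/funext => z /=; rewrite !fctE /GRing.scale /=; ring.
  apply: is_derive_eq.
  by rewrite !fctE /= /GRing.scale /=; field.
rewrite /dF; apply: mulr_le0_ge0; last by rewrite invr_ge0 ler0n.
have h := expR_ge1Dx (- x).
have hx : expR x * expR (- x) = 1 by rewrite expRxMexpNx_1.
have ex := expR_gt0 x.
nra.
Qed.

Lemma hoeff_ln (p u : R) : 0 <= p <= 1 -> 0 <= u ->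
  ln (1 - p + p * expR (- u)) <= - (u * p) + u ^+ 2 / 8.
Proof.
move=> /andP[p0 p1] u0.
pose D := fun x : R => 1 - p + p * expR (- x).
have Dpos : forall x, 0 < D x.
  move=> x; rewrite /D; have := expR_gt0 (- x).
  case: (ltrgtP p 0) p0 => // [pg0 _ e|-> _ _]; last by rewrite mul0r; lra.
  have := mulr_gt0 pg0 e; lra.
have hE : forall x : R, is_derive x 1 (expR \o -%R) (expR (- x) * - 1).
  move=> x; apply: is_derive_comp1; try exact: is_deriveNid; try exact: is_derive_expR.
pose dD := fun x : R => 0 + p *: (expR (- x) * - 1).
have hD : forall x : R, is_derive x 1 D (dD x).
  move=> x.
  have -> : D = cst (1 - p) + p \*: (expR \o -%R).
    by apply/funext => z; rewrite /D /=.
  exact: (is_deriveD (is_derive_cst _ _ _) (is_deriveZ p (hE x))).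
have hL : forall x : R, is_derive x 1 (@ln R \o D) ((D x)^-1 * dD x).
  move=> x; have := is_derive_comp1 (hD x) (is_derive1_ln (Dpos x)).
  exact.
pose F := fun x : R => ln (D x) + p * x - 8^-1 * (x * x).
pose dF := fun x : R => (D x)^-1 * dD x + p - 8^-1 * (x + x).
suff : F u <= F 0.
  rewrite /F /D oppr0 expR0 mulr1 subrK ln1 => h.
  have e0 : 0 + p * 0 - 8^-1 * (0 * 0) = 0 :> R by ring.
  rewrite e0 in h.
  have -> : - (u * p) + u ^+ 2 / 8 = - (p * u - 8^-1 * (u * u)) by rewrite expr2; field.
  lra.
apply: (@mvt_le0 F dF) => // [x|x x0].
  have -> : F = ((@ln R \o D) + (p \*: (id : R -> R))) - (8^-1 \*: ((id : R -> R) * (id : R -> R))).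
    by apply/funext => z; rewrite /F /=.
  apply: (is_derive_eq (is_deriveB (is_deriveD (hL x) (is_deriveZ p (is_derive_id x 1)))
            (is_deriveZ 8^-1 (is_deriveM (is_derive_id x 1) (is_derive_id x 1))))).
  by rewrite /dF /GRing.scale /=; ring.
have Dx := Dpos x.
set E := expR (- x).
set b := expR (x / 2).
set K := x / 4.
have K0 : 0 <= K by rewrite /K; lra.
have Eb : E * (b * b) = 1.
  rewrite /E /b -!expRD.
  have -> : - x + (x / 2 + x / 2) = 0 by field.
  by rewrite expR0.
have hb : b - 1 <= K * (b + 1).
  have := L1 (x / 2); rewrite -/b (_ : x / 2 / 2 = K); last by rewrite /K; field.
  by apply; lra.
have b1 : 1 <= b by rewrite /b; have := expR_ge1Dx (x / 2); lra.
set q := p * (1 - p).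
have q0 : 0 <= q by rewrite /q; apply: mulr_ge0; lra.
have c1 : q * (b * b - 1) <= K * ((1 - p) * (b * b) + p).
  have e1 : q * (b * b - 1) = (q * (b + 1)) * (b - 1) by ring.
  have e2 : q * (b + 1) * (b - 1) <= q * (b + 1) * (K * (b + 1)).
    by apply: ler_wpM2l => //; apply: mulr_ge0 => //; lra.
  have e3 : K * ((1 - p) * (b * b) + p) - q * (b + 1) * (K * (b + 1)) =
            K * (((1 - p) * b - p) ^+ 2) by rewrite /q expr2; ring.
  have e4 : 0 <= K * (((1 - p) * b - p) ^+ 2) by apply: mulr_ge0 => //; apply: sqr_ge0.
  lra.
have E0 : 0 <= E by apply: expR_ge0.
have c2 : q * (1 - E) <= K * (1 - p + p * E).
  have := ler_wpM2l E0 c1.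
  have -> : E * (q * (b * b - 1)) = q * (E * (b * b)) - q * E by ring.
  have -> : E * (K * ((1 - p) * (b * b) + p)) = K * (1 - p) * (E * (b * b)) + K * p * E by ring.
  rewrite Eb; lra.
have -> : dF x = (p * D x - p * E - K * D x) / D x.
  rewrite /dF /dD /K /GRing.scale /= -/E.
  by field; rewrite lt0r_neq0.
apply: mulr_le0_ge0; last by rewrite invr_ge0 ltW.
have -> : p * D x - p * E - K * D x = q * (1 - E) - K * (1 - p + p * E).
  by rewrite /D /q -/E; ring.
lra.
Qed.
End An.

Section Jensen.
Variables (R : realType) (n : nat) (A Y : 'rV[R]_n -> Prop) (l : 'rV[R]_n -> 'rV[R]_n -> R).
Hypothesis convA : convex_subset A.
Hypothesis convl : convex_in_first A Y l.

Lemma jensen (I : eqType) (r : seq I) (P : pred I) (c : I -> R) (v : I -> 'rV[R]_n) yy :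
  (forall k, 0 <= c k) -> (forall k, A (v k)) -> Y yy ->
  \sum_(k <- r | P k) c k = 1 ->
  A (\sum_(k <- r | P k) c k *: v k) /\
  l (\sum_(k <- r | P k) c k *: v k) yy <= \sum_(k <- r | P k) c k * l (v k) yy.
Proof.
move=> c0 Av Yyy; elim: r c c0 => [|x r IH] c c0.
  by rewrite big_nil => /eqP; rewrite eq_sym oner_eq0.
rewrite !big_cons; case: (boolP (P x)) => Px; last exact: IH.
move=> Hs.
set S := \sum_(k <- r | P k) c k.
have S0 : 0 <= S by apply: sumr_ge0.
have [S_eq0|S_gt0] := eqVneq S 0.
  have ck : forall k, k \in r -> P k -> c k = 0.
    have := S_eq0; move/eqP; rewrite /S psumr_eq0; last by move=> k _; exact: c0.
    move=> /allP H k kr Pk; have := H k kr; rewrite /= Pk /= => /eqP.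
    done.
  have -> : \sum_(k <- r | P k) c k *: v k = 0.
    by rewrite big_seq_cond big1 // => k /andP[kr Pk]; rewrite ck // scale0r.
  have -> : \sum_(k <- r | P k) c k * l (v k) yy = 0.
    by rewrite big_seq_cond big1 // => k /andP[kr Pk]; rewrite ck // mul0r.
  have cx1 : c x = 1 by move: Hs; rewrite -/S S_eq0 addr0.
  by rewrite cx1 scale1r mul1r !addr0; split.
have Spos : 0 < S by rewrite lt_def S_gt0 S0.
pose c' := fun k => c k / S.
have c'0 : forall k, 0 <= c' k by move=> k; apply: divr_ge0.
have Hs' : \sum_(k <- r | P k) c' k = 1.
  by rewrite /c' -mulr_suml -/S divff.
have [IHA IHl] := IH c' c'0 Hs'.
set z := \sum_(k <- r | P k) c' k *: v k.
have ez : \sum_(k <- r | P k) c k *: v k = (1 - c x) *: z.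
  have -> : 1 - c x = S by move: Hs; rewrite -/S; lra.
  rewrite /z scaler_sumr; apply: eq_bigr => k _.
  by rewrite scalerA /c' mulrC divfK // lt0r_neq0.
have el : \sum_(k <- r | P k) c k * l (v k) yy =
          (1 - c x) * \sum_(k <- r | P k) c' k * l (v k) yy.
  have -> : 1 - c x = S by move: Hs; rewrite -/S; lra.
  rewrite mulr_sumr; apply: eq_bigr => k _.
  by rewrite mulrA /c' [S * _]mulrC divfK // lt0r_neq0.
have cx01 : 0 <= c x <= 1 by rewrite c0 /=; rewrite -Hs lerDl.
rewrite ez el; split; first exact: convA.
apply: le_trans (convl _ _ _ _ _ _ _ _) _ => //.
apply: lerD => //; apply: ler_wpM2l => //.
by rewrite subr_ge0; case/andP: cx01.
Qed.
End Jensen.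

Lemma chord (R : realType) (eta x : R) : 0 <= x <= 1 ->
  expR (- (eta * x)) <= 1 - x + x * expR (- eta).
Proof.
move=> /andP[x0 x1].
have := convex_expR (Itv01 x0 x1) (- eta) 0.
rewrite !convRE /= expR0 /unstable.onem mulr0 addr0 mulr1.
by rewrite mulrN mulrC addrC.
Qed.

Lemma eqle (R : realType) (a b : R) : a = b -> a <= b.
Proof. by move->. Qed.

Lemma hoeff (R : realType) (p u : R) : 0 <= p <= 1 -> 0 <= u ->
  1 - p + p * expR (- u) <= expR (- (u * p) + u ^+ 2 / 8).
Proof.
move=> hp u0.
have Dpos : 0 < 1 - p + p * expR (- u).
  case/andP: hp => p0 p1; have := expR_gt0 (- u).
  case: (ltrgtP p 0) p0 => // [pg0 _ e|-> _ _]; last by rewrite mul0r; lra.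
  have := mulr_gt0 pg0 e; lra.
rewrite -[X in X <= _]lnK ?posrE // ler_expR.
exact: hoeff_ln.
Qed.

Section Main.
Variables (R : realType) (N n : nat) (A Y : 'rV[R]_n -> Prop)
  (l : 'rV[R]_n -> 'rV[R]_n -> R) (y : nat -> 'rV[R]_n) (f : nat -> 'I_N -> 'rV[R]_n)
  (Omega : nat -> 'I_N -> {set 'I_N}) (eta_a eta_w : R).
Hypothesis convA : convex_subset A.
Hypothesis lb : forall a b, A a -> Y b -> 0 <= l a b <= 1.
Hypothesis convl : convex_in_first A Y l.
Hypothesis Yy : forall t, Y (y t).
Hypothesis Af : forall t j, A (f t j).
Hypothesis ew : 0 < eta_w.

Local Notation st t := (run l y f Omega eta_a eta_w t).

Lemma ahat_pos t j : 0 < a_hat (st t) j /\ 0 < a_hat' (st t) j.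
Proof.
elim: t j => [|t IH] j /=; first by split; rewrite ltr01.
have [h1 h2] := IH j; split; apply: mulr_gt0 => //; exact: expR_gt0.
Qed.

Lemma alpha01 t j : 0 <= alpha (st t) j <= 1.
Proof.
have [h1 h2] := ahat_pos t j; rewrite /alpha.
have s0 : 0 < a_hat (st t) j + a_hat' (st t) j by apply: addr_gt0.
apply/andP; split; first by apply: divr_ge0; apply: ltW.
by rewrite ler_pdivrMr // mul1r lerDl ltW.
Qed.

Lemma what_exp t j : w_hat (st t) j = expR (- (eta_w * Lbar l y f Omega eta_a eta_w t j)).
Proof.
elim: t j => [|t IH] j.
  by rewrite /Lbar big_ord0 mulr0 oppr0 expR0.
rewrite /= IH /Lbar big_ord_recr /= -expRD; congr expR; ring.
Qed.

Lemma what_pos t j : 0 < w_hat (st t) j.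
Proof. rewrite what_exp; exact: expR_gt0. Qed.

Lemma w_props t (s : state R N n) j : (forall k, 0 < w_hat s k) ->
  (forall k, 0 <= w Omega t s j k) /\
  \sum_(k in Lambda Omega t j) w Omega t s j k = 1 /\
  0 < \sum_(k in Lambda Omega t j) w_hat s k.
Proof.
move=> wp.
set S := \sum_(k in Lambda Omega t j) w_hat s k.
have jL : j \in Lambda Omega t j by rewrite /Lambda setU11.
have Spos : 0 < S.
  rewrite /S (bigD1 j) //=; apply: ltr_pwDl => //.
  by apply: sumr_ge0 => k _; apply: ltW.
split; [|split] => //.
  move=> k; rewrite /w; case: ifP => // _.
  by apply: divr_ge0; [apply: ltW|apply: ltW].
rewrite (eq_bigr (fun k => w_hat s k / S)); last first.
  by move=> k kL; rewrite /w kL.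
by rewrite -mulr_suml -/S divff // lt0r_neq0.
Qed.

Lemma fhat_in t j : A (f_hat (st t) j).
Proof.
elim: t j => [|t IH] j /=; first exact: Af.
have [c0 [cs _]] := w_props t _ j (what_pos t).
have fbA : forall k, A (f_bar f t (st t) k).
  by move=> k; rewrite /f_bar; apply: convA => //; apply: alpha01.
by case: (@jensen _ _ _ _ _ convA convl _ (index_enum 'I_N)
   (fun k => k \in Lambda Omega t j) _ _ (y 0) c0 fbA (Yy 0) cs).
Qed.

Lemma fbar_in t j : A (f_bar f t (st t) j).
Proof. by rewrite /f_bar; apply: convA; [exact: Af|exact: fhat_in|exact: alpha01]. Qed.


Variables (T : nat) (i : 'I_N).
Hypothesis ass1 : forall t, (1 <= t <= T)%N -> Omega t i \subset Omega t.-1 i.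

Definition Phi t := \sum_(k in Lambda Omega t i) w_hat (st t) k.

Lemma Phi_step t : (t < T)%N ->
  Phi t.+1 <= Phi t * expR (- (eta_w * l (f_hat (st t.+1) i) (y t.+1)) + eta_w ^+ 2 / 8).
Proof.
move=> tT.
have [c0 [cs Ppos]] := w_props t _ i (what_pos t).
set c := w Omega t (st t) i.
set lbk := fun k => l (f_bar f t (st t) k) (y t.+1).
have lb01 : forall k, 0 <= lbk k <= 1 by move=> k; apply: lb; [exact: fbar_in|exact: Yy].
have sub : Lambda Omega t.+1 i \subset Lambda Omega t i.
  by rewrite /Lambda; apply: finset.setUS; apply: (ass1 t.+1); exact: tT.
have e1 : Phi t.+1 <= \sum_(k in Lambda Omega t i) w_hat (st t) k * expR (- (eta_w * lbk k)).
  rewrite /Phi [X in _ <= X](big_setID (Lambda Omega t.+1 i)) /=.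
  rewrite (finset.setIidPr sub) lerDl; apply: sumr_ge0 => k _.
  by apply: mulr_ge0; [apply: ltW; exact: what_pos|exact: expR_ge0].
have e2 : \sum_(k in Lambda Omega t i) w_hat (st t) k * expR (- (eta_w * lbk k)) =
   Phi t * \sum_(k in Lambda Omega t i) c k * expR (- (eta_w * lbk k)).
  rewrite mulr_sumr; apply: eq_bigr => k kL.
  rewrite /c /w kL mulrA -/(Phi t) [Phi t * _]mulrC divfK //.
  by apply: lt0r_neq0.
set X := \sum_(k in Lambda Omega t i) c k * lbk k.
have e3 : \sum_(k in Lambda Omega t i) c k * expR (- (eta_w * lbk k)) <=
          1 - X + X * expR (- eta_w).
  apply: (le_trans (y := \sum_(k in Lambda Omega t i) (c k + c k * lbk k * (expR (- eta_w) - 1)))).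
    apply: ler_sum => k _.
    have h := @chord _ eta_w _ (lb01 k).
    have -> : c k + c k * lbk k * (expR (- eta_w) - 1) = c k * (1 - lbk k + lbk k * expR (- eta_w)) by ring.
    exact: ler_wpM2l.
  rewrite big_split /= cs -mulr_suml -/X.
  by apply: eqle; ring.
have X01 : 0 <= X <= 1.
  apply/andP; split.
    by apply: sumr_ge0 => k _; apply: mulr_ge0 => //; case/andP: (lb01 k).
  rewrite -cs; apply: ler_sum => k _; rewrite -[X in _ <= X]mulr1.
  by apply: ler_wpM2l => //; case/andP: (lb01 k).
have e4 := @hoeff _ _ _ X01 (ltW ew).
have fbA : forall k, A (f_bar f t (st t) k) by move=> k; exact: fbar_in.
have [_ jl] := @jensen _ _ _ _ _ convA convl _ (index_enum 'I_N)
   (fun k => k \in Lambda Omega t i) _ _ (y t.+1) c0 fbA (Yy _) cs.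
have e5 : - (eta_w * X) + eta_w ^+ 2 / 8 <= - (eta_w * l (f_hat (st t.+1) i) (y t.+1)) + eta_w ^+ 2 / 8.
  rewrite lerD2r lerN2; apply: ler_wpM2l; first exact: ltW.
  exact: jl.
apply: (le_trans e1); rewrite e2; apply: ler_wpM2l; first exact: ltW.
apply: (le_trans e3); apply: (le_trans e4).
by rewrite ler_expR.
Qed.


Lemma Phi_iter t : (t <= T)%N ->
  Phi t <= Phi 0 * expR (- (eta_w * Lhat l y f Omega eta_a eta_w t i) + eta_w ^+ 2 / 8 * t%:R).
Proof.
elim: t => [|t IH] tT.
  by rewrite /Lhat big_ord0 mulr0 oppr0 mulr0 addr0 expR0 mulr1.
apply: (le_trans (Phi_step t tT)).
have P0 : 0 <= Phi t by have [_ [_ h]] := w_props t _ i (what_pos t); exact: ltW.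
apply: (le_trans (ler_wpM2r (expR_ge0 _) (IH (ltnW tT)))).
rewrite -[_ * _ * expR _]mulrA -expRD.
apply: eqle; congr (_ * expR _).
rewrite /Lhat big_ord_recr /= -natr1; ring.
Qed.

Lemma final_sec j : (1 <= T)%N -> j \in Lambda Omega T i ->
    Lhat l y f Omega eta_a eta_w T i - Lbar l y f Omega eta_a eta_w T j
      <= eta_w * T%:R / 8 + ln (#|Lambda Omega 0 i|%:R) / eta_w.
Proof.
move=> T1 jL.
have Phi0 : Phi 0 = #|Lambda Omega 0 i|%:R.
  by rewrite /Phi sumr_const.
have P0 : 0 < Phi 0 by have [_ [_ h]] := w_props 0 _ i (what_pos 0).
have lo : expR (- (eta_w * Lbar l y f Omega eta_a eta_w T j)) <= Phi T.
  rewrite -what_exp /Phi (bigD1 j) //= lerDl; apply: sumr_ge0 => k _.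
  by apply: ltW; exact: what_pos.
have h := le_trans lo (Phi_iter T (leqnn T)).
move: h; rewrite -ler_ln ?posrE ?expR_gt0 //; last by apply: mulr_gt0 => //; exact: expR_gt0.
rewrite lnM ?posrE ?expR_gt0 // !expRK -Phi0.
set Lh := Lhat _ _ _ _ _ _ _ _; set Lb := Lbar _ _ _ _ _ _ _ _.
set d := ln (Phi 0) => h.
rewrite -(ler_pM2l ew).
have -> : eta_w * (eta_w * T%:R / 8 + d / eta_w) = eta_w ^+ 2 / 8 * T%:R + d.
  by field; apply: lt0r_neq0.
rewrite mulrBr; lra.
Qed.

End Main.

Theorem lemma2 (R : realType) (N n : nat)
  (A Y : 'rV[R]_n -> Prop) (l : 'rV[R]_n -> 'rV[R]_n -> R)
  (y : nat -> 'rV[R]_n) (f : nat -> 'I_N -> 'rV[R]_n)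
  (Omega : nat -> 'I_N -> {set 'I_N}) (eta_a eta_w : R) (T : nat) (i : 'I_N) :
  convex_subset A -> convex_subset Y ->
  (forall a b, A a -> Y b -> 0 <= l a b <= 1) ->
  convex_in_first A Y l ->
  (forall t, Y (y t)) ->
  (forall t j, A (f t j)) ->
  (* undirected communication graph *)
  (forall t j k, (k \in Omega t j) = (j \in Omega t k)) ->
  (1 <= T)%N -> 0 < eta_a -> 0 < eta_w ->
  (* Assumption 1 *)
  (forall t, (1 <= t <= T)%N -> Omega t i \subset Omega t.-1 i) ->
  forall j, j \in Lambda Omega T i ->
    Lhat l y f Omega eta_a eta_w T i - Lbar l y f Omega eta_a eta_w T j
      <= eta_w * T%:R / 8 + ln (#|Lambda Omega 0 i|%:R) / eta_w.
Proof.
move=> cA _ hl cl hY hA _ T1 _ ew a1 j jL.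
apply: final_sec; try eassumption.
Qed.
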